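(* There is an absolute constant $C>0$ and an algorithm with the following property. Let $S$ be a set of arms with reward distributions supported on $[0,1]$ and means $\theta_1\ge\dots\ge\theta_{|S|}$ (indexing unknown to the algorithm), where $|S|/10$ and $K/2$ are integers, $\frac{|S|}{3}\le K\le|S|-1$, and let $\gamma,\delta\in(0,1/2]$, $\phi\in(0,1]$. If $\theta_{K/2}-\theta_K\ge\phi$, then the algorithm makes at most $C\frac{|S|}{\phi^2}(\log\frac1\gamma+\log\frac1\delta)$ pulls and with probability at least $1-\delta$ outputs a set $T\subseteq S$ with $|T|=|S|/10$ such that at most $\gamma K$ arms of $T$ belong to $\{K+1,\dots,|S|\}$ (the bottom $|S|-K$ arms of $S$).
   Context: Stochastic bandit model: each pull yields an independent sample from the pulled arm's unknown distribution. *)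

(* Defs.v *)
From Stdlib Require Import Reals Lra Lia List Arith ClassicalDescription.
Open Scope R_scope.

Definition bounded01 (f : R -> R) : Prop :=
  exists M, forall x, 0 <= x <= 1 -> Rabs (f x) <= M.

(** A reward distribution supported on [0,1], given by its expectation
    operator on functions bounded on [0,1]: linear, monotone w.r.t. the
    values on [0,1] (this encodes the support), and normalised. *)
Record armdist := {
  Ex : (R -> R) -> R;
  Ex_lin : forall a f g, bounded01 f -> bounded01 g ->
    Ex (fun x => a * f x + g x) = a * Ex f + Ex g;
  Ex_mono : forall f g, bounded01 f -> bounded01 g ->
    (forall x, 0 <= x <= 1 -> f x <= g x) -> Ex f <= Ex g;
  Ex_one : Ex (fun _ => 1) = 1
}.

Definition mean (d : armdist) : R := Ex d (fun x => x).

(** An (adaptive, possibly randomised) bandit algorithm as a decision tree: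
    - [Pull i k]: pull arm i, observe reward x, continue with [k x];
    - [Coin p k]: flip an internal coin showing [true] with probability p;
    - [Out T]: stop and output the list of arms T. *)
Inductive alg : Type :=
| Pull : nat -> (R -> alg) -> alg
| Coin : R -> (bool -> alg) -> alg
| Out : list nat -> alg.

Fixpoint succ_prob (D : nat -> armdist) (P : list nat -> Prop) (t : alg) : R :=
  match t with
  | Out T => if excluded_middle_informative (P T) then 1 else 0
  | Pull i k => Ex (D i) (fun x => succ_prob D P (k x))
  | Coin p k => p * succ_prob D P (k true) + (1 - p) * succ_prob D P (k false)
  end.

Fixpoint pulls_within (n : nat) (t : alg) (B : R) : Prop :=
  match t with
  | Out _ => True
  | Pull i k => (i < n)%nat /\ 1 <= B /\ forall x, pulls_within n (k x) (B - 1)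
  | Coin p k => 0 <= p <= 1 /\ forall b, pulls_within n (k b) B
  end.

(** sigma is a ranking of the arms 0..n-1 (a bijection of {0..n-1}) by
    nonincreasing mean: sigma j is the arm of rank j+1. *)
Definition sorted_ranking (n : nat) (D : nat -> armdist) (sigma : nat -> nat) : Prop :=
  (forall j, (j < n)%nat -> (sigma j < n)%nat) /\
  (forall i j, (i < n)%nat -> (j < n)%nat -> sigma i = sigma j -> i = j) /\
  (forall i j, (i <= j)%nat -> (j < n)%nat -> mean (D (sigma j)) <= mean (D (sigma i))).

(** Number of elements of T that are among the bottom n-K arms
    (ranks K+1..n, i.e. sigma K, ..., sigma (n-1)). *)
Definition bad_count (n K : nat) (sigma : nat -> nat) (T : list nat) : nat :=
  length (filter (fun a => existsb (fun j => Nat.eqb (sigma j) a) (seq K (n - K))) T).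

Definition good_output (n K : nat) (gamma : R) (sigma : nat -> nat) (T : list nat) : Prop :=
  NoDup T /\ (forall a, In a T -> (a < n)%nat) /\ length T = (n / 10)%nat /\
  INR (bad_count n K sigma T) <= gamma * INR K.

(* Main.v *)
Require Import Defs.
From Stdlib Require Import Reals Lra Lia List Arith ClassicalDescription.
From Stdlib Require Import FunctionalExtensionality ZArith.
Open Scope R_scope.

Lemma Rabs_le_between a b : Rabs a <= b -> -b <= a <= b.
Proof. unfold Rabs; destruct (Rcase_abs a); lra. Qed.

Lemma Ex_zero d : Ex d (fun _ => 0) = 0.
Proof.
  assert (B : bounded01 (fun _ : R => 0)) by (exists 0; intros; rewrite Rabs_R0; lra).
  pose proof (Ex_lin d 1 _ _ B B) as H; cbv beta in H.
  replace (fun x : R => 1 * 0 + 0) with (fun _ : R => 0) in H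
    by (apply functional_extensionality; intros; ring).
  lra.
Qed.

Lemma bounded01_const c : bounded01 (fun _ => c).
Proof. exists (Rabs c); intros; lra. Qed.

Lemma Ex_const d c : Ex d (fun _ => c) = c.
Proof.
  pose proof (Ex_lin d c _ _ (bounded01_const 1) (bounded01_const 0)) as H; cbv beta in H.
  replace (fun x : R => c * 1 + 0) with (fun _ : R => c) in H
    by (apply functional_extensionality; intros; ring).
  rewrite H, Ex_one, Ex_zero; ring.
Qed.

Lemma Ex_scale d a f : bounded01 f -> Ex d (fun x => a * f x) = a * Ex d f.
Proof.
  intro Bf.
  pose proof (Ex_lin d a _ _ Bf (bounded01_const 0)) as H; cbv beta in H.
  replace (fun x : R => a * f x + 0) with (fun x => a * f x) in H
    by (apply functional_extensionality; intros; ring).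
  rewrite H, Ex_zero; ring.
Qed.

Lemma bnd01_of d f M : (forall x, 0 <= x <= 1 -> Rabs (f x) <= M) ->
  Rabs (Ex d f) <= M.
Proof.
  intro H.
  assert (Bf : bounded01 f) by (exists M; auto).
  assert (M0 : 0 <= M) by (specialize (H 0); pose proof (Rabs_pos (f 0)); lra).
  pose proof (Ex_mono d f (fun _ => M) Bf (bounded01_const M)) as H1.
  pose proof (Ex_mono d (fun _ => -M) f (bounded01_const (-M)) Bf) as H2.
  rewrite Ex_const in H1, H2.
  apply Rabs_le; split.
  - apply H2; intros x Hx; specialize (H x Hx); apply Rabs_le_between in H; lra.
  - apply H1; intros x Hx; specialize (H x Hx); apply Rabs_le_between in H; lra.
Qed.

Lemma Ex_ext01 d f g : bounded01 f -> bounded01 g ->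
  (forall x, 0 <= x <= 1 -> f x = g x) -> Ex d f = Ex d g.
Proof.
  intros Bf Bg H. apply Rle_antisym; apply Ex_mono; auto; intros x Hx; rewrite H; auto; lra.
Qed.

Lemma mean_01 d : 0 <= mean d <= 1.
Proof.
  unfold mean.
  assert (Bx : bounded01 (fun x => x)) by (exists 1; intros; rewrite Rabs_pos_eq; lra).
  split.
  - rewrite <- (Ex_const d 0). apply Ex_mono; auto using bounded01_const; intros; lra.
  - rewrite <- (Ex_const d 1). apply Ex_mono; auto using bounded01_const; intros; lra.
Qed.

Fixpoint Es (d : armdist) (m : nat) (s : R) (h : R -> R) : R :=
  match m with
  | O => h s
  | S m' => Ex d (fun x => Es d m' (s + x) h)
  end.

Definition bnd (s : R) (m : nat) (h : R -> R) (M : R) : Prop :=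
  forall u, s <= u <= s + INR m -> Rabs (h u) <= M.

Lemma bnd_shift s m h M x : bnd s (S m) h M -> 0 <= x <= 1 -> bnd (s + x) m h M.
Proof. unfold bnd; intros H Hx u Hu; apply H; rewrite S_INR; lra. Qed.

Lemma Es_bound d m : forall s h M, bnd s m h M -> Rabs (Es d m s h) <= M.
Proof.
  induction m as [|m IH]; intros s h M H; simpl.
  - apply H; simpl; lra.
  - apply bnd01_of. intros x Hx. apply IH. apply bnd_shift; auto.
Qed.

Lemma Es_bounded01 d m s h M : bnd s (S m) h M -> bounded01 (fun x => Es d m (s + x) h).
Proof. intros H; exists M; intros x Hx; apply Es_bound, bnd_shift; auto. Qed.

Lemma Es_mono d m : forall s h1 h2 M1 M2, bnd s m h1 M1 -> bnd s m h2 M2 ->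
  (forall u, s <= u <= s + INR m -> h1 u <= h2 u) -> Es d m s h1 <= Es d m s h2.
Proof.
  induction m as [|m IH]; intros s h1 h2 M1 M2 B1 B2 H; simpl.
  - apply H; simpl; lra.
  - apply Ex_mono; try (eapply Es_bounded01; eauto).
    intros x Hx. apply (IH _ _ _ M1 M2); try (apply bnd_shift; auto).
    intros u Hu; apply H; rewrite S_INR; lra.
Qed.

Lemma Es_const d m : forall s c, Es d m s (fun _ => c) = c.
Proof.
  induction m as [|m IH]; intros s c; simpl; auto.
  replace (fun x => Es d m (s + x) (fun _ => c)) with (fun _ : R => c)
    by (apply functional_extensionality; intros; rewrite IH; auto).
  apply Ex_const.
Qed.

Lemma Es_lin d m : forall s a h1 h2 M1 M2, bnd s m h1 M1 -> bnd s m h2 M2 ->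
  Es d m s (fun u => a * h1 u + h2 u) = a * Es d m s h1 + Es d m s h2.
Proof.
  induction m as [|m IH]; intros s a h1 h2 M1 M2 B1 B2; simpl; auto.
  rewrite <- Ex_lin; try (eapply Es_bounded01; eauto).
  apply Ex_ext01.
  - exists (Rabs a * M1 + M2). intros x Hx.
    apply Es_bound. intros u Hu. pose proof (bnd_shift _ _ _ _ _ B1 Hx u Hu).
    pose proof (bnd_shift _ _ _ _ _ B2 Hx u Hu).
    eapply Rle_trans; [apply Rabs_triang|]. rewrite Rabs_mult.
    apply Rplus_le_compat; auto. apply Rmult_le_compat_l; auto. apply Rabs_pos.
  - exists (Rabs a * M1 + M2). intros x Hx.
    eapply Rle_trans; [apply Rabs_triang|]. rewrite Rabs_mult.
    apply Rplus_le_compat; [apply Rmult_le_compat_l; [apply Rabs_pos|]|];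
      apply Es_bound, bnd_shift; auto.
  - intros x Hx. eapply IH; apply bnd_shift; eauto.
Qed.

Lemma Es_scale d m s a h M : bnd s m h M -> Es d m s (fun u => a * h u) = a * Es d m s h.
Proof.
  intro B.
  assert (B0 : bnd s m (fun _ => 0) 0) by (intros u _; rewrite Rabs_R0; lra).
  pose proof (Es_lin d m s a h (fun _ => 0) M 0 B B0) as H.
  rewrite Es_const in H.
  replace (fun u => a * h u) with (fun u => a * h u + 0)
    by (apply functional_extensionality; intros; ring).
  rewrite H; ring.
Qed.

Lemma exp_mono x y : x <= y -> exp x <= exp y.
Proof. intros H; destruct (Req_dec x y) as [E|E]; [subst; lra| left; apply exp_increasing; lra]. Qed.

Lemma bounded01_exp l : bounded01 (fun x => exp (l * x)).
Proof.
  exists (exp (Rabs l)). intros x Hx. rewrite Rabs_pos_eq by (left; apply exp_pos).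
  apply exp_mono. destruct (Rle_dec 0 l).
  - rewrite Rabs_pos_eq by lra. nra.
  - rewrite Rabs_left by lra. nra.
Qed.

Lemma Es_exp d l m : forall s, Es d m s (fun u => exp (l * u)) =
  exp (l * s) * (Ex d (fun x => exp (l * x))) ^ m.
Proof.
  induction m as [|m IH]; intros s; simpl; [ring|].
  replace (fun x => Es d m (s + x) (fun u => exp (l * u))) with
    (fun x => (exp (l * s) * Ex d (fun x => exp (l * x)) ^ m) * exp (l * x)).
  - rewrite Ex_scale by apply bounded01_exp. ring.
  - apply functional_extensionality; intros x. rewrite IH.
    rewrite Rmult_plus_distr_l, exp_plus. ring.
Qed.

Lemma exp_pow' k x : exp (INR k * x) = exp x ^ k.
Proof.
  induction k as [|k IH]; simpl pow.
  - simpl; rewrite Rmult_0_l, exp_0; auto.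
  - rewrite S_INR, Rmult_plus_distr_r, exp_plus, IH, Rmult_1_l. ring.
Qed.

Lemma exp_quad y : y <= /2 -> exp y <= 1 + y + 2 * y ^ 2.
Proof.
  intros Hy.
  pose proof (exp_ineq1_le (- y)) as HF.
  assert (EF : exp y * exp (- y) = 1) by (rewrite <- exp_plus, Rplus_opp_r, exp_0; auto).
  pose proof (exp_pos y). pose proof (exp_pos (-y)).
  assert (H1 : exp y * (1 - y) <= 1).
  { rewrite <- EF. apply Rmult_le_compat_l; lra. }
  assert (H2 : 1 <= (1 + y + 2 * y ^ 2) * (1 - y)) by nra.
  assert (H3 : exp y * (1 - y) <= (1 + y + 2 * y ^ 2) * (1 - y)) by lra.
  apply Rmult_le_reg_r with (1 - y); lra.
Qed.

Lemma mgf_bound d l : Rabs l <= /2 ->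
  Ex d (fun x => exp (l * x)) <= exp (l * mean d + 2 * l ^ 2).
Proof.
  intros Hl. apply Rabs_le_between in Hl.
  assert (Bx : bounded01 (fun x => x)) by (exists 1; intros; rewrite Rabs_pos_eq; lra).
  apply Rle_trans with (Ex d (fun x => l * (fun x => x) x + (fun _ => 1 + 2 * l ^ 2) x)).
  - apply Ex_mono.
    + apply bounded01_exp.
    + exists (Rabs l + Rabs (1 + 2 * l ^ 2)). intros x Hx. cbv beta. pose proof (Rabs_pos l).
      eapply Rle_trans; [apply Rabs_triang|]. rewrite Rabs_mult.
      apply Rplus_le_compat_r. rewrite (Rabs_pos_eq x) by lra. nra.
    + intros x Hx. cbv beta. eapply Rle_trans; [apply exp_quad; destruct Hl; destruct Hx; nra|].
      assert (x ^ 2 <= 1) by nra. assert (0 <= l ^ 2) by nra. replace ((l * x) ^ 2) with (l ^ 2 * x ^ 2) by ring. nra.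
  - rewrite Ex_lin by (auto using bounded01_const). rewrite Ex_const.
    unfold mean. pose proof (exp_ineq1_le (l * Ex d (fun x => x) + 2 * l ^ 2)). lra.
Qed.

Lemma pow_le_compat_exp q e m : 0 <= q -> q <= exp e -> q ^ m <= exp (INR m * e).
Proof. intros H0 H. rewrite exp_pow'. apply pow_incr; auto. Qed.

Definition devf (m : nat) (t mu : R) (u : R) : R :=
  if Rle_dec t (Rabs (u / INR m - mu)) then 1 else 0.

Lemma Ex_exp_nonneg d l : 0 <= Ex d (fun x => exp (l * x)).
Proof.
  rewrite <- (Ex_const d 0). apply Ex_mono; auto using bounded01_const, bounded01_exp.
  intros; left; apply exp_pos.
Qed.

Lemma tail_bound d m t : (0 < m)%nat -> 0 < t <= /2 ->
  Es d m 0 (devf m t (mean d)) <= 2 * exp (- (INR m * t ^ 2 / 8)).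
Proof.
  intros Hm Ht.
  set (mu := mean d). set (l := t / 4). set (M := INR m).
  assert (HM : 0 < M) by (apply lt_0_INR; auto).
  set (A := exp (- (l * (M * (mu + t))))). set (B := exp (l * (M * (mu - t)))).
  pose proof (mean_01 d) as Hmu. fold mu in Hmu.
  assert (Bd : bnd 0 m (devf m t mu) 1).
  { intros u _. unfold devf. destruct Rle_dec; rewrite ?Rabs_R1, ?Rabs_R0; lra. }
  assert (BE : forall l', bnd 0 m (fun u => exp (l' * u)) (exp (Rabs l' * M))).
  { intros l' u Hu. rewrite Rabs_pos_eq by (left; apply exp_pos). apply exp_mono.
    fold M in Hu. destruct (Rle_dec 0 l').
    - rewrite Rabs_pos_eq by lra. nra.
    - rewrite Rabs_left by lra. nra. }
  assert (BE2 : bnd 0 m (fun u => B * exp (- l * u)) (B * exp (Rabs (-l) * M))).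
  { intros u Hu. rewrite Rabs_mult, (Rabs_pos_eq B) by (left; apply exp_pos).
    apply Rmult_le_compat_l; [left; apply exp_pos| apply BE; auto]. }
  eapply Rle_trans.
  - apply (Es_mono d m 0 _ (fun u => A * exp (l * u) + B * exp (- l * u)) 1
      (A * exp (Rabs l * M) + B * exp (Rabs (-l) * M)) Bd).
    + intros u Hu. eapply Rle_trans; [apply Rabs_triang|].
      rewrite Rabs_mult, (Rabs_pos_eq A) by (left; apply exp_pos).
      apply Rplus_le_compat; [apply Rmult_le_compat_l; [left; apply exp_pos| apply BE; auto]|].
      apply BE2; auto.
    + intros u Hu. unfold devf. fold mu.
      assert (PA : 0 < A * exp (l * u)) by (apply Rmult_lt_0_compat; apply exp_pos).
      assert (PB : 0 < B * exp (- l * u)) by (apply Rmult_lt_0_compat; apply exp_pos).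
      destruct Rle_dec as [H|H]; [|lra].
      unfold A, B. rewrite <- !exp_plus.
      assert (Hdiv : u / INR m = u / M) by auto.
      unfold Rabs in H. destruct Rcase_abs.
      * assert (u <= M * (mu - t)).
        { apply Rmult_le_reg_r with (/ M); [apply Rinv_0_lt_compat; lra|].
          replace (M * (mu - t) * / M) with (mu - t) by (field; lra). unfold Rdiv in H; fold M in H. lra. }
        assert (1 <= exp (l * (M * (mu - t)) + - l * u)).
        { rewrite <- exp_0 at 1. apply exp_mono. unfold l. nra. }
        pose proof (exp_pos (- (l * (M * (mu + t))) + l * u)). lra.
      * assert (M * (mu + t) <= u).
        { apply Rmult_le_reg_r with (/ M); [apply Rinv_0_lt_compat; lra|].
          replace (M * (mu + t) * / M) with (mu + t) by (field; lra). unfold Rdiv in H; fold M in H. lra. }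
        assert (1 <= exp (- (l * (M * (mu + t))) + l * u)).
        { rewrite <- exp_0 at 1. apply exp_mono. unfold l. nra. }
        pose proof (exp_pos (l * (M * (mu - t)) + - l * u)). lra.
  - rewrite (Es_lin d m 0 A _ _ _ _ (BE l) BE2).
    rewrite (Es_scale d m 0 B _ _ (BE (-l))).
    rewrite !Es_exp, Rmult_0_r, Rmult_0_r, exp_0, !Rmult_1_l.
    assert (Hl : Rabs l <= /2) by (unfold l; rewrite Rabs_pos_eq; lra).
    assert (Hl' : Rabs (-l) <= /2) by (rewrite Rabs_Ropp; auto).
    pose proof (pow_le_compat_exp _ _ m (Ex_exp_nonneg d l) (mgf_bound d l Hl)) as E1.
    pose proof (pow_le_compat_exp _ _ m (Ex_exp_nonneg d (-l)) (mgf_bound d (-l) Hl')) as E2.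
    fold M mu in E1, E2.
    assert (PA : 0 < A) by apply exp_pos. assert (PB : 0 < B) by apply exp_pos.
    apply Rle_trans with (A * exp (M * (l * mu + 2 * l ^ 2)) + B * exp (M * (- l * mu + 2 * (- l) ^ 2))).
    + apply Rplus_le_compat; apply Rmult_le_compat_l; lra.
    + unfold A, B. rewrite <- !exp_plus.
      replace (- (l * (M * (mu + t))) + M * (l * mu + 2 * l ^ 2)) with (- (M * t ^ 2 / 8)) by (unfold l; field).
      replace (l * (M * (mu - t)) + M * (- l * mu + 2 * (- l) ^ 2)) with (- (M * t ^ 2 / 8)) by (unfold l; field).
      lra.
Qed.

Fixpoint pullsum (i m : nat) (s : R) (k : R -> alg) : alg :=
  match m with
  | O => k s
  | S m' => Pull i (fun x => pullsum i m' (s + x) k)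
  end.

Fixpoint allarms (m : nat) (l : list nat) (k : list R -> alg) : alg :=
  match l with
  | nil => k nil
  | i :: l' => pullsum i m 0 (fun s => allarms m l' (fun es => k (s :: es)))
  end.

Fixpoint Eall (D : nat -> armdist) (m : nat) (l : list nat) (g : list R -> R) : R :=
  match l with
  | nil => g nil
  | i :: l' => Es (D i) m 0 (fun s => Eall D m l' (fun es => g (s :: es)))
  end.

Lemma sp_pullsum D P i m : forall s k,
  succ_prob D P (pullsum i m s k) = Es (D i) m s (fun u => succ_prob D P (k u)).
Proof.
  induction m as [|m IH]; intros s k; simpl; auto.
  f_equal. apply functional_extensionality; intros x. apply IH.
Qed.

Lemma sp_allarms D P m l : forall k,
  succ_prob D P (allarms m l k) = Eall D m l (fun es => succ_prob D P (k es)).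
Proof.
  induction l as [|i l IH]; intros k; simpl; auto.
  rewrite sp_pullsum. f_equal. apply functional_extensionality; intros s. apply IH.
Qed.

Definition gb (g : list R -> R) (M : R) := forall es, Rabs (g es) <= M.

Lemma Eall_bound D m l : forall g M, gb g M -> Rabs (Eall D m l g) <= M.
Proof.
  induction l as [|i l IH]; intros g M H; simpl; auto.
  apply Es_bound. intros u _. apply IH. intros es; apply H.
Qed.

Lemma Eall_mono D m l : forall g1 g2 M1 M2, gb g1 M1 -> gb g2 M2 ->
  (forall es, g1 es <= g2 es) -> Eall D m l g1 <= Eall D m l g2.
Proof.
  induction l as [|i l IH]; intros g1 g2 M1 M2 B1 B2 H; simpl; auto.
  apply (Es_mono _ _ _ _ _ M1 M2).
  - intros u _. apply Eall_bound. intros es; apply B1.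
  - intros u _. apply Eall_bound. intros es; apply B2.
  - intros u _. apply (IH _ _ M1 M2); intros es; auto.
Qed.

Fixpoint sumN (F : nat -> R) (n : nat) : R :=
  match n with
  | O => 0
  | S n' => F O + sumN (fun j => F (S j)) n'
  end.

Lemma sumN_bound n : forall F M, (forall j, Rabs (F j) <= M) -> Rabs (sumN F n) <= INR n * M.
Proof.
  induction n as [|n IH]; intros F M H; simpl sumN.
  - simpl; rewrite Rabs_R0; lra.
  - rewrite S_INR. eapply Rle_trans; [apply Rabs_triang|].
    pose proof (IH (fun j => F (S j)) M (fun j => H (S j))). pose proof (H O). lra.
Qed.

Lemma sumN_le n : forall F G, (forall j, (j < n)%nat -> F j <= G j) -> sumN F n <= sumN G n.
Proof.
  induction n as [|n IH]; intros F G H; simpl; [lra|].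
  apply Rplus_le_compat; [apply H; lia|]. apply IH. intros j Hj; apply H; lia.
Qed.

Lemma sumN_scale n : forall F c, sumN (fun j => c * F j) n = c * sumN F n.
Proof.
  induction n as [|n IH]; intros F c; simpl; [ring|]. rewrite IH. ring.
Qed.

Lemma sumN_const n c : sumN (fun _ => c) n = INR n * c.
Proof. induction n as [|n IH]; simpl sumN; [simpl; ring|]. rewrite IH, S_INR. ring. Qed.

Lemma Eall_sum D m l : forall a0 F M, (forall j u, Rabs (F j u) <= M) ->
  Eall D m l (fun es => a0 + sumN (fun j => F j (nth j es 0)) (length l)) =
  a0 + sumN (fun j => Es (D (nth j l O)) m 0 (F j)) (length l).
Proof.
  induction l as [|i l IH]; intros a0 F M HF; simpl; auto.
  replace (fun s => Eall D m l (fun es => a0 + (F O s + sumN (fun j => F (S j) (nth j es 0)) (length l))))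
    with (fun s => 1 * F O s + (a0 + sumN (fun j => Es (D (nth j l O)) m 0 (F (S j))) (length l))).
  - rewrite (Es_lin _ _ _ 1 _ _ M (Rabs (a0 + sumN (fun j => Es (D (nth j l O)) m 0 (F (S j))) (length l)))).
    + rewrite Es_const. ring.
    + intros u _; auto.
    + intros u _; lra.
  - apply functional_extensionality; intros s.
    transitivity (a0 + F O s + sumN (fun j => Es (D (nth j l O)) m 0 (F (S j))) (length l)); [ring|].
    rewrite <- (IH (a0 + F O s) (fun j => F (S j)) M) by auto.
    f_equal. apply functional_extensionality; intros es. ring.
Qed.

Lemma pw_pullsum n i m : forall s k B, (i < n)%nat -> INR m <= B ->
  (forall u, pulls_within n (k u) (B - INR m)) -> pulls_within n (pullsum i m s k) B.
Proof.
  induction m as [|m IH]; intros s k B Hi HB Hk; simpl.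
  - replace B with (B - 0) by ring. auto.
  - rewrite S_INR in HB. pose proof (pos_INR m).
    split; auto. split; [lra|]. intros x. apply IH; auto; [lra|].
    intros u. replace (B - 1 - INR m) with (B - INR (S m)) by (rewrite S_INR; ring). auto.
Qed.

Lemma pw_allarms n m l : forall k B, (forall i, In i l -> (i < n)%nat) ->
  INR m * INR (length l) <= B -> (forall es, exists T, k es = Out T) ->
  pulls_within n (allarms m l k) B.
Proof.
  induction l as [|i l IH]; intros k B Hl HB Hk; simpl.
  - destruct (Hk nil) as [T E]; rewrite E; simpl; auto.
  - simpl length in HB. rewrite S_INR in HB. pose proof (pos_INR m). pose proof (pos_INR (length l)).
    apply pw_pullsum; [apply Hl; simpl; auto| nra |].
    intros u. apply IH.
    + intros j Hj; apply Hl; simpl; auto.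
    + lra.
    + intros es; apply Hk.
Qed.

Fixpoint best (sc : nat -> R) (x : nat) (l : list nat) : nat :=
  match l with
  | nil => x
  | y :: l' => if Rlt_dec (sc x) (sc y) then best sc y l' else best sc x l'
  end.

Lemma best_in sc l : forall x, In (best sc x l) (x :: l).
Proof.
  induction l as [|y l IH]; intros x; simpl; auto.
  destruct Rlt_dec.
  - specialize (IH y). simpl in IH; tauto.
  - specialize (IH x). simpl in IH; tauto.
Qed.

Lemma best_max sc l : forall x z, In z (x :: l) -> sc z <= sc (best sc x l).
Proof.
  induction l as [|y l IH]; intros x z Hz; simpl.
  - simpl in Hz; destruct Hz as [<-|[]]; lra.
  - destruct Rlt_dec as [H|H].
    + destruct Hz as [<-|Hz].
      * pose proof (IH y y (or_introl eq_refl)); lra.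
      * apply IH; auto.
    + destruct Hz as [<-|[<-|Hz]].
      * apply IH; simpl; auto.
      * pose proof (IH x x (or_introl eq_refl)); lra.
      * apply IH; simpl; auto.
Qed.

Definition rm (a : nat) (l : list nat) := filter (fun z => negb (Nat.eqb z a)) l.

Lemma rm_in a l z : In z (rm a l) <-> In z l /\ z <> a.
Proof.
  unfold rm. rewrite filter_In. rewrite Bool.negb_true_iff, Nat.eqb_neq. tauto.
Qed.

Lemma rm_len a l : NoDup l -> In a l -> length (rm a l) = (length l - 1)%nat.
Proof.
  induction l as [|x l IH]; intros Hn Ha; simpl in *; [tauto|].
  inversion Hn; subst. unfold rm; simpl. destruct (Nat.eqb x a) eqn:E; simpl.
  - apply Nat.eqb_eq in E; subst.
    assert (forall l', ~ In a l' -> filter (fun z => negb (Nat.eqb z a)) l' = l') as F.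
    { induction l' as [|y l' IH']; simpl; auto. intros Hy.
      destruct (Nat.eqb y a) eqn:E'; simpl.
      - apply Nat.eqb_eq in E'; subst; tauto.
      - rewrite IH'; tauto. }
    rewrite F; auto. lia.
  - apply Nat.eqb_neq in E. destruct Ha as [->|Ha]; [tauto|].
    fold (rm a l). rewrite IH; auto. destruct l; simpl in *; [tauto|lia].
Qed.

Arguments rm : simpl never.

Lemma rm_nodup a l : NoDup l -> NoDup (rm a l).
Proof. apply NoDup_filter. Qed.

Fixpoint sel (sc : nat -> R) (k : nat) (rem : list nat) : list nat :=
  match k with
  | O => nil
  | S k' => match rem with
            | nil => nil
            | x :: l => best sc x l :: sel sc k' (rm (best sc x l) (x :: l))
            end
  end.

Lemma sel_incl sc k : forall rem a, In a (sel sc k rem) -> In a rem.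
Proof.
  induction k as [|k IH]; intros rem a H; simpl in H; [tauto|].
  destruct rem as [|x l]; [tauto|].
  destruct H as [<-|H]; [apply best_in|].
  apply IH in H. apply rm_in in H. tauto.
Qed.

Lemma sel_nodup sc k : forall rem, NoDup rem -> NoDup (sel sc k rem).
Proof.
  induction k as [|k IH]; intros rem H; simpl; [constructor|].
  destruct rem as [|x l]; [constructor|].
  constructor.
  - intros Hin. apply sel_incl in Hin. apply rm_in in Hin. tauto.
  - apply IH, rm_nodup; auto.
Qed.

Lemma sel_len sc k : forall rem, NoDup rem -> (k <= length rem)%nat -> length (sel sc k rem) = k.
Proof.
  induction k as [|k IH]; intros rem H Hk; simpl; auto.
  destruct rem as [|x l]; simpl in Hk; [lia|].
  simpl. f_equal. apply IH; [apply rm_nodup; auto|].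
  rewrite rm_len; auto; [simpl; lia| apply best_in].
Qed.

Lemma sel_top sc k : forall rem a b, In a (sel sc k rem) -> In b rem -> sc a < sc b ->
  In b (sel sc k rem).
Proof.
  induction k as [|k IH]; intros rem a b Ha Hb Hab; simpl in *; [tauto|].
  destruct rem as [|x l]; [tauto|].
  destruct (Nat.eq_dec b (best sc x l)) as [E|E]; [left; auto|right].
  destruct Ha as [<-|Ha].
  - pose proof (best_max sc l x b Hb). lra.
  - apply (IH _ a); auto. apply rm_in; auto.
Qed.

Lemma count_sum (f : nat -> bool) n : forall k,
  sumN (fun j => if f (k + j)%nat then 1 else 0) n = INR (length (filter f (seq k n))).
Proof.
  induction n as [|n IH]; intros k; simpl; auto.
  rewrite Nat.add_0_r.
  replace (fun j => if f (k + S j)%nat then 1 else 0) with (fun j => if f (S k + j)%nat then 1 else 0)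
    by (apply functional_extensionality; intros j; rewrite Nat.add_succ_r; auto).
  rewrite IH. destruct (f k); simpl length; rewrite ?S_INR; ring.
Qed.

Definition isdevb (D : nat -> armdist) (m : nat) (t : R) (es : list R) (a : nat) : bool :=
  if Rle_dec t (Rabs (nth a es 0 / INR m - mean (D a))) then true else false.

Definition scf (es : list R) (a : nat) : R := nth a es 0.

Lemma comb (n K : nat) (gamma phi : R) (D : nat -> armdist) (sigma : nat -> nat) (m : nat) (es : list R) :
  (n <= 3 * K)%nat -> Nat.even K = true -> (K < n)%nat ->
  0 < gamma <= / 2 -> 0 < phi -> (0 < m)%nat ->
  sorted_ranking n D sigma ->
  mean (D (sigma (K / 2 - 1)%nat)) - mean (D (sigma (K - 1)%nat)) >= phi ->
  INR (length (filter (isdevb D m (phi / 2) es) (seq 0 n))) < gamma * INR K / 5 ->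
  good_output n K gamma sigma (sel (scf es) (n / 10) (seq 0 n)).
Proof.
  intros HnK Hev HKn Hg Hphi Hm [Hs1 [Hs2 Hs3]] Hgap Hcd.
  set (T := sel (scf es) (n / 10) (seq 0 n)).
  set (isdev := isdevb D m (phi / 2) es).
  set (cd := length (filter isdev (seq 0 n))). fold isdev cd in Hcd.
  apply Nat.even_spec in Hev. destruct Hev as [h Hh].
  assert (Hh2 : (K / 2 = h)%nat) by (rewrite Hh, Nat.mul_comm, Nat.div_mul; lia).
  rewrite Hh2 in Hgap.
  assert (Hq : (10 * (n / 10) <= n)%nat) by (apply Nat.Div0.mul_div_le; lia).
  assert (HTlen : length T = (n / 10)%nat).
  { unfold T. apply sel_len; [apply seq_NoDup| rewrite length_seq; lia]. }
  assert (HM : 0 < INR m) by (apply lt_0_INR; auto).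
  assert (Hcd10 : (10 * cd < K)%nat).
  { apply INR_lt. rewrite mult_INR. simpl (INR 10). pose proof (pos_INR K). nra. }
  assert (Tin : forall a, In a T -> In a (seq 0 n)) by (intros a Ha; eapply sel_incl; eauto).
  assert (Claim : forall a j, In a T -> (K <= j < n)%nat -> sigma j = a -> isdev a = true).
  { intros a j Ha Hj Hsj.
    destruct (isdev a) eqn:Ea; auto. exfalso.
    unfold isdev, isdevb in Ea. destruct Rle_dec as [_|Na]; [discriminate|].
    apply Rnot_le_lt in Na.
    set (G := filter (fun b => negb (isdev b)) (map sigma (seq 0 h))).
    assert (HG : incl (a :: G) T).
    { intros b [<-|Hb]; auto.
      unfold G in Hb. apply filter_In in Hb. destruct Hb as [Hb Hnd].
      apply in_map_iff in Hb. destruct Hb as [i [<- Hi]]. apply in_seq in Hi.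
      unfold isdev, isdevb in Hnd. destruct Rle_dec as [_|Nb]; [discriminate|].
      apply Rnot_le_lt in Nb.
      apply (sel_top _ _ _ a); auto.
      - apply in_seq. split; [lia|]. apply Hs1; lia.
      - assert (E1 : mean (D (sigma (h - 1)%nat)) <= mean (D (sigma i))) by (apply Hs3; lia).
        assert (E2 : mean (D a) <= mean (D (sigma (K - 1)%nat))) by (rewrite <- Hsj; apply Hs3; lia).
        apply Rabs_def2 in Na. apply Rabs_def2 in Nb.
        assert (scf es a / INR m < scf es (sigma i) / INR m) by (unfold scf; lra).
        unfold Rdiv in H. apply Rmult_lt_reg_r with (/ INR m); auto.
        apply Rinv_0_lt_compat; auto. }
    assert (HND : NoDup (a :: G)).
    { constructor.
      - intros Hin. unfold G in Hin. apply filter_In in Hin. destruct Hin as [Hin _].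
        apply in_map_iff in Hin. destruct Hin as [i [Ei Hi]]. apply in_seq in Hi.
        rewrite <- Hsj in Ei. apply Hs2 in Ei; lia.
      - apply NoDup_filter. apply NoDup_map_NoDup_ForallPairs; [|apply seq_NoDup].
        intros x y Hx Hy E. apply in_seq in Hx, Hy. apply Hs2; auto; lia. }
    pose proof (NoDup_incl_length HND HG) as L1. simpl length in L1.
    pose proof (filter_length isdev (map sigma (seq 0 h))) as L2.
    rewrite length_map, length_seq in L2.
    assert (L3 : (length (filter isdev (map sigma (seq 0 h))) <= cd)%nat).
    { apply NoDup_incl_length.
      - apply NoDup_filter. apply NoDup_map_NoDup_ForallPairs; [|apply seq_NoDup].
        intros x y Hx Hy E. apply in_seq in Hx, Hy. apply Hs2; auto; lia.
      - intros b Hb. apply filter_In in Hb. destruct Hb as [Hb Hd].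
        apply filter_In. split; auto. apply in_map_iff in Hb. destruct Hb as [i [<- Hi]].
        apply in_seq in Hi. apply in_seq. split; [lia|]. apply Hs1; lia. }
    fold G in L2. lia. }
  split; [apply sel_nodup, seq_NoDup|].
  split; [intros a Ha; apply Tin in Ha; apply in_seq in Ha; lia|].
  split; [auto|].
  assert (Hbc : (bad_count n K sigma T <= cd)%nat).
  { unfold bad_count. fold T. apply NoDup_incl_length.
    - apply NoDup_filter, sel_nodup, seq_NoDup.
    - intros x Hx. apply filter_In in Hx. destruct Hx as [Hx Hb].
      apply existsb_exists in Hb. destruct Hb as [j [Hj E]]. apply Nat.eqb_eq in E.
      apply in_seq in Hj. apply filter_In. split; auto. apply (Claim x j); auto; lia. }
  apply le_INR in Hbc. pose proof (pos_INR K). nra.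
Qed.

Lemma ln_mono x y : 0 < x -> x <= y -> ln x <= ln y.
Proof. intros H1 H2. destruct (Req_dec x y) as [->|E]; [lra|]. left; apply ln_increasing; lra. Qed.

Lemma div_ge a b : 0 <= a -> 0 < b <= 1 -> a <= a / b.
Proof.
  intros Ha Hb. unfold Rdiv. assert (1 <= / b) by (rewrite <- Rinv_1; apply Rinv_le_contravar; lra). nra.
Qed.

Definition theA (n K : nat) (gamma delta phi : R) : alg :=
  let L := ln (/ gamma) + ln (/ delta) in
  let m := Z.to_nat (up (128 * L / phi ^ 2)) in
  allarms m (seq 0 n) (fun es => Out (sel (scf es) (n / 10) (seq 0 n))).

Lemma ln_inv_ge g : 0 < g <= / 2 -> 2 * ln 2 / 2 <= ln (/ g).
Proof.
  intros Hg. replace (2 * ln 2 / 2) with (ln 2) by field.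
  apply ln_mono; [lra|]. rewrite <- (Rinv_inv 2). apply Rinv_le_contravar; lra.
Qed.

Theorem mainTheorem8 :
  exists C : R, 0 < C /\
  exists A : nat -> nat -> R -> R -> R -> alg,
  forall (n K : nat) (gamma delta phi : R) (D : nat -> armdist) (sigma : nat -> nat),
    (n mod 10 = 0)%nat -> Nat.even K = true ->
    (n <= 3 * K)%nat -> (K <= n - 1)%nat -> (K < n)%nat ->
    0 < gamma <= / 2 -> 0 < delta <= / 2 -> 0 < phi <= 1 ->
    sorted_ranking n D sigma ->
    mean (D (sigma (K / 2 - 1)%nat)) - mean (D (sigma (K - 1)%nat)) >= phi ->
    pulls_within n (A n K gamma delta phi)
      (C * INR n / phi ^ 2 * (ln (/ gamma) + ln (/ delta))) /\
    succ_prob D (good_output n K gamma sigma) (A n K gamma delta phi) >= 1 - delta.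
Proof.
  exists 129. split; [lra|]. exists theA.
  intros n K gamma delta phi D sigma Hmod Hev HnK HK1 HKn Hg Hd Hphi Hsr Hgap.
  unfold theA.
  set (L := ln (/ gamma) + ln (/ delta)).
  pose proof (ln_inv_ge _ Hg) as Lg. pose proof (ln_inv_ge _ Hd) as Ld. pose proof ln_lt_2 as l2.
  assert (HL : 1 < L) by (unfold L; lra).
  assert (Hp2 : 0 < phi ^ 2 <= 1) by (split; nra).
  set (x := 128 * L / phi ^ 2).
  assert (Hx : 128 * L <= x) by (unfold x; apply div_ge; lra).
  set (m := Z.to_nat (up x)).
  destruct (archimed x) as [A1 A2].
  assert (Hm : INR m = IZR (up x)).
  { unfold m. rewrite INR_IZR_INZ, Z2Nat.id; auto. apply le_IZR. lra. }
  assert (Hm0 : (0 < m)%nat) by (apply INR_lt; simpl; lra).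
  assert (Hn0 : 0 < INR n) by (apply lt_0_INR; lia).
  split.
  - apply pw_allarms.
    + intros i Hi; apply in_seq in Hi; lia.
    + rewrite length_seq. rewrite Hm.
      assert (IZR (up x) <= 129 * L / phi ^ 2).
      { assert (L <= L / phi ^ 2) by (apply div_ge; lra).
        assert (Ex : x = 128 * (L / phi ^ 2)) by (unfold x; field; lra).
        replace (129 * L / phi ^ 2) with (129 * (L / phi ^ 2)) by (field; lra). lra. }
      replace (129 * INR n / phi ^ 2 * L) with (INR n * (129 * L / phi ^ 2)) by (field; lra).
      rewrite Rmult_comm. apply Rmult_le_compat_l; lra.
    + intros es; eexists; reflexivity.
  - rewrite sp_allarms.
    set (t := phi / 2).
    set (c := 5 / (gamma * INR K)).
    assert (HK0 : 0 < INR K) by (apply lt_0_INR; lia).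
    assert (Hc : 0 < c) by (unfold c; apply Rdiv_lt_0_compat; nra).
    set (F := fun j u => - c * devf m t (mean (D j)) u).
    assert (HF : forall j u, Rabs (F j u) <= c).
    { intros j u. unfold F, devf. destruct Rle_dec;
      [rewrite Rmult_1_r, Rabs_Ropp, Rabs_pos_eq | rewrite Rmult_0_r, Rabs_R0]; lra. }
    set (H := fun es => 1 + sumN (fun j => F j (nth j es 0)) (length (seq 0 n))).
    assert (Hcount : forall es, sumN (fun j => devf m t (mean (D j)) (nth j es 0)) n =
                                INR (length (filter (isdevb D m t es) (seq 0 n)))).
    { intros es. rewrite <- count_sum. f_equal. apply functional_extensionality; intros j.
      simpl. unfold devf, isdevb. destruct Rle_dec; auto. }
    apply Rle_ge. apply Rle_trans with (Eall D m (seq 0 n) H).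
    + unfold H. rewrite (Eall_sum D m (seq 0 n) 1 F c HF). rewrite length_seq.
      apply Rle_trans with (1 + sumN (fun _ => - c * (2 * exp (- (INR m * t ^ 2 / 8)))) n).
      * rewrite sumN_const.
        assert (Hexp : exp (- (INR m * t ^ 2 / 8)) <= (gamma * delta) ^ 4).
        { replace ((gamma * delta) ^ 4) with (exp (INR 4 * (- L))).
          - apply exp_mono. unfold t. rewrite Hm. simpl INR.
            assert (IZR (up x) * phi ^ 2 >= 128 * L).
            { apply Rle_ge. apply Rle_trans with (x * phi ^ 2); [|nra].
              unfold x. unfold Rdiv. rewrite Rmult_assoc, Rinv_l by lra. lra. }
            nra.
          - rewrite exp_pow'. f_equal. unfold L. rewrite !ln_Rinv by lra.
            rewrite Ropp_plus_distr, !Ropp_involutive, exp_plus, !exp_ln by lra. auto. }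
        assert (INR n <= 3 * INR K).
        { replace 3 with (INR 3) by (simpl; ring). rewrite <- mult_INR. apply le_INR; auto. }
        assert (Hgd : 0 < gamma * delta <= / 4) by (split; nra).
        assert (c * INR n * (2 * (gamma * delta) ^ 4) <= delta).
        { unfold c. unfold Rdiv.
          replace (5 * / (gamma * INR K) * INR n * (2 * (gamma * delta) ^ 4))
            with (10 * (INR n / INR K) * (gamma ^ 3 * delta ^ 4)) by (field; lra).
          assert (INR n / INR K <= 3).
          { apply Rmult_le_reg_r with (INR K); auto. unfold Rdiv.
            rewrite Rmult_assoc, Rinv_l by lra. lra. }
          assert (0 <= INR n / INR K) by (unfold Rdiv; apply Rmult_le_pos; [lra| left; apply Rinv_0_lt_compat; lra]).
          assert (gamma ^ 3 * delta ^ 3 <= / 64).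
          { replace (gamma ^ 3 * delta ^ 3) with ((gamma * delta) ^ 3) by ring.
            replace (/ 64) with ((/ 4) ^ 3) by field. apply pow_incr. lra. }
          assert (0 < gamma ^ 3 * delta ^ 3) by (apply Rmult_lt_0_compat; apply pow_lt; lra).
          replace (gamma ^ 3 * delta ^ 4) with ((gamma ^ 3 * delta ^ 3) * delta) by ring.
          nra. }
        assert (c * INR n * (2 * exp (- (INR m * t ^ 2 / 8))) <= c * INR n * (2 * (gamma * delta) ^ 4)).
        { apply Rmult_le_compat_l; [apply Rmult_le_pos; lra| lra]. }
        lra.
      * apply Rplus_le_compat_l. apply sumN_le. intros j Hj.
        rewrite seq_nth by auto. rewrite Nat.add_0_l. unfold F.
        rewrite (Es_scale _ _ _ _ _ 1).
        -- assert (Es (D j) m 0 (devf m t (mean (D j))) <= 2 * exp (- (INR m * t ^ 2 / 8))).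
           { replace (fun u => devf m t (mean (D j)) u) with (devf m t (mean (D j))) by auto.
             apply tail_bound; auto. unfold t; lra. }
           replace (fun u => devf m t (mean (D j)) u) with (devf m t (mean (D j))) by auto.
           assert (c * Es (D j) m 0 (devf m t (mean (D j))) <= c * (2 * exp (- (INR m * t ^ 2 / 8)))).
           { apply Rmult_le_compat_l; lra. }
           lra.
        -- intros u _. unfold devf. destruct Rle_dec; rewrite ?Rabs_R1, ?Rabs_R0; lra.
    + eapply Eall_mono with (M1 := 1 + INR (length (seq 0 n)) * c) (M2 := 1).
      * intros es. unfold H. eapply Rle_trans; [apply Rabs_triang|]. rewrite Rabs_R1.
        pose proof (sumN_bound (length (seq 0 n)) (fun j => F j (nth j es 0)) c (fun j => HF j _)). lra.
      * intros es. cbn [succ_prob]. destruct excluded_middle_informative; rewrite ?Rabs_R1, ?Rabs_R0; lra.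
      * intros es. cbn [succ_prob]. unfold H. rewrite length_seq.
        replace (sumN (fun j => F j (nth j es 0)) n) with
          (- c * INR (length (filter (isdevb D m t es) (seq 0 n)))).
        2:{ rewrite <- Hcount, <- sumN_scale. auto. }
        pose proof (pos_INR (length (filter (isdevb D m t es) (seq 0 n)))).
        destruct (Rlt_dec (INR (length (filter (isdevb D m t es) (seq 0 n)))) (gamma * INR K / 5)) as [Hl|Hl].
        -- destruct excluded_middle_informative as [_|Ng]; [nra|].
           exfalso; apply Ng. apply (comb n K gamma phi D sigma m es); auto; lra.
        -- destruct excluded_middle_informative; [nra|].
           apply Rnot_lt_le in Hl.
           assert (1 <= c * INR (length (filter (isdevb D m t es) (seq 0 n)))).
           { unfold c. apply Rmult_le_reg_l with (gamma * INR K); [nra|].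
             unfold Rdiv. field_simplify; [|nra]. nra. }
           nra.
Qed.
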